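(* Let $\mathcal{H}$ be a finite set of hypotheses with a prior probability distribution $P$, $\mathcal{T}$ a finite set of tests, $\mathcal{O}$ a finite set of outcomes, each $h\in\mathcal{H}$ a function $h:\mathcal{T}\to\mathcal{O}$, and $\mathcal{R}$ a finite collection of decision regions $r\subseteq\mathcal{H}$ with $\bigcup_{r\in\mathcal{R}} r=\mathcal{H}$. Let $\mathcal{G}$, $k$, $\mathcal{E}$ and $f_{\mathrm{HEC}}$ be as defined in the context. Then $f_{\mathrm{HEC}}$ is strongly adaptive monotone and adaptive submodular, i.e.: (i) for every $\mathcal{S}\subseteq\mathcal{T}\times\mathcal{O}$, every $t\in\mathcal{T}$ and every $h\in\mathcal{H}$, $f_{\mathrm{HEC}}(\mathcal{S}\cup\{(t,h(t))\})-f_{\mathrm{HEC}}(\mathcal{S})\ge 0$; (ii) for all $\mathcal{S}\subseteq\mathcal{S}'\subseteq\mathcal{T}\times\mathcal{O}$ with $P(\mathcal{V}(\mathcal{S}'))>0$ and every test $t\in\mathcal{T}$, $\Delta(t\mid\mathcal{S})\ge\Delta(t\mid\mathcal{S}')$.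
   Context: Subregions: hypotheses are grouped into the same subregion iff they belong to exactly the same decision regions; $\mathcal{G}$ is the set of these classes, and $g\subseteq r$ means every hypothesis of $g$ lies in $r$. Set $k=\min\big(\max_{h\in\mathcal{H}}|\{r: h\in r\}|,\ \max_{r\in\mathcal{R}}|\{g\in\mathcal{G}: g\subseteq r\}|\big)+1$. $\mathcal{E}$ is the set of all multisets $e$ of exactly $k$ subregions (repetitions allowed) such that no $r\in\mathcal{R}$ satisfies $g\subseteq r$ for all $g\in e$. For $\mathcal{S}\subseteq\mathcal{T}\times\mathcal{O}$ let $\mathcal{V}(\mathcal{S})=\{h: h(t)=o\ \forall (t,o)\in\mathcal{S}\}$. Define $f_{\mathrm{HEC}}(\mathcal{S})=\sum_{e\in\mathcal{E}}\prod_{g\in e}P(g)-\sum_{e\in\mathcal{E}}\prod_{g\in e}P(g\cap\mathcal{V}(\mathcal{S}))$, where $P(A)=\sum_{h\in A}P(h)$ and products over a multiset count multiplicities. The expected marginal gain of test $t$ given $\mathcal{S}$ with $P(\mathcal{V}(\mathcal{S}))>0$ is $\Delta(t\mid\mathcal{S})=\sum_{h\in\mathcal{V}(\mathcal{S})}\frac{P(h)}{P(\mathcal{V}(\mathcal{S}))}\big(f_{\mathrm{HEC}}(\mathcal{S}\cup\{(t,h(t))\})-f_{\mathrm{HEC}}(\mathcal{S})\big)$. *)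

(* Defs.v *)
From HB Require Import structures.
From mathcomp Require Import all_boot all_order all_algebra.
Set Implicit Arguments. Unset Strict Implicit. Unset Printing Implicit Defensive.
Import Order.TTheory GRing.Theory Num.Theory.
Local Open Scope ring_scope.

(* Hypotheses are elements of a finite type H; [ev h t] is the outcome h(t).
   Prior: P : H -> R.  Decision regions: rs : {set {set H}}. *)

Definition probA (R : numDomainType) (H : finType) (P : H -> R) (A : {set H}) : R :=
  \sum_(h in A) P h.

Definition subregion_of (H : finType) (rs : {set {set H}}) (h : H) : {set H} :=
  [set h' | [forall r in rs, (h' \in r) == (h \in r)]].

Definition subregions (H : finType) (rs : {set {set H}}) : {set {set H}} :=
  [set subregion_of rs h | h : H].

Definition hec_k (H : finType) (rs : {set {set H}}) : nat :=
  (minn (\max_(h : H) #|[set r in rs | h \in r]|)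
        (\max_(r in rs) #|[set g in subregions rs | g \subset r]|)).+1.

(* A multiset of subregions is represented by its multiplicity function m
   (multiplicity of g is m g). *)
Definition is_hyperedge (H : finType) (rs : {set {set H}})
    (m : {ffun {set H} -> 'I_(hec_k rs).+1}) : bool :=
  [&& [forall g, (0 < m g)%N ==> (g \in subregions rs)],
      (\sum_(g : {set H}) (m g : nat) == hec_k rs)%N &
      ~~ [exists r in rs, [forall g, (0 < m g)%N ==> (g \subset r)]]].

Definition edge_sum (R : numDomainType) (H : finType) (rs : {set {set H}})
    (w : {set H} -> R) : R :=
  \sum_(m : {ffun {set H} -> 'I_(hec_k rs).+1} | is_hyperedge m)
     \prod_(g : {set H}) w g ^+ (m g : nat).

Definition version_space (H T O : finType) (ev : H -> T -> O)
    (S : {set T * O}) : {set H} :=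
  [set h | [forall to in S, ev h to.1 == to.2]].

Definition f_HEC (R : numDomainType) (H T O : finType) (ev : H -> T -> O)
    (P : H -> R) (rs : {set {set H}}) (S : {set T * O}) : R :=
  edge_sum rs (fun g => probA P g)
  - edge_sum rs (fun g => probA P (g :&: version_space ev S)).

Definition hec_gain (R : numFieldType) (H T O : finType) (ev : H -> T -> O)
    (P : H -> R) (rs : {set {set H}}) (t : T) (S : {set T * O}) : R :=
  \sum_(h in version_space ev S)
     (P h / probA P (version_space ev S)) *
     (f_HEC ev P rs (S :|: [set (t, ev h t)]) - f_HEC ev P rs S).

(* Main.v *)
Require Import Defs.
From HB Require Import structures.
From mathcomp Require Import all_boot all_order all_algebra.
From mathcomp Require Import ring lra zify.
Import Order.TTheory GRing.Theory Num.Theory.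
Local Open Scope ring_scope.
Set Implicit Arguments. Unset Strict Implicit. Unset Printing Implicit Defensive.

Lemma step_ineq (R : realDomainType) (u v u' v' U V U' V' : R) :
  0 <= v -> v <= u -> 0 <= V -> V <= U -> v <= v' -> u - v <= u' - v' ->
  V <= V' -> U - V <= U' - V' ->
  0 <= u * U - v * V /\ u * U - v * V <= u' * U' - v' * V'.
Proof.
move=> *; split; first nra.
have -> : u * U - v * V = (u - v) * U + v * (U - V) by ring.
have -> : u' * U' - v' * V' = (u' - v') * U' + v' * (U' - V') by ring.
apply: lerD.
  apply: ler_pM; lra.
apply: ler_pM; lra.
Qed.

Lemma pow_incr (R : realDomainType) (x x' c : R) n :
  0 <= x -> x <= x' -> 0 <= c ->
  0 <= (x + c) ^+ n - x ^+ n /\ (x + c) ^+ n - x ^+ n <= (x' + c) ^+ n - x' ^+ n.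
Proof.
move=> x0 xx c0; elim: n => [|n [IH1 IH2]]; first by rewrite !expr0 subrr.
rewrite !exprS; apply: step_ineq => //; try lra.
- exact: exprn_ge0.
- by apply: lerXn2r => //; rewrite nnegrE; lra.
Qed.

Definition mono (R : numDomainType) (I : finType) (K : nat) (w : I -> R)
  (m : {ffun I -> 'I_K}) : R := \prod_i w i ^+ m i.

Lemma mono_le (R : realDomainType) (I : finType) K (w w' : I -> R) (m : {ffun I -> 'I_K}) :
  (forall i, 0 <= w i <= w' i) -> 0 <= mono w m <= mono w' m.
Proof.
move=> hw; rewrite /mono; apply/andP; split.
  by apply: prodr_ge0 => i _; apply: exprn_ge0; case/andP: (hw i).
apply: ler_prod => i _; case/andP: (hw i) => h1 h2.
rewrite exprn_ge0 //=; apply: lerXn2r => //; rewrite nnegrE //; exact: le_trans h2.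
Qed.

Lemma mono_incr (R : realDomainType) (I : finType) K (a a' c : I -> R) (m : {ffun I -> 'I_K}) :
  (forall i, 0 <= a i <= a' i) -> (forall i, 0 <= c i) ->
  mono (fun i => a i + c i) m - mono a m <= mono (fun i => a' i + c i) m - mono a' m.
Proof.
move=> ha hc; rewrite /mono.
suff : forall r : seq I,
  0 <= \prod_(i <- r) (a i + c i) ^+ m i - \prod_(i <- r) a i ^+ m i /\
  \prod_(i <- r) (a i + c i) ^+ m i - \prod_(i <- r) a i ^+ m i <=
  \prod_(i <- r) (a' i + c i) ^+ m i - \prod_(i <- r) a' i ^+ m i by move/(_ (index_enum I)) => [].
elim => [|i r [IH1 IH2]]; first by rewrite !big_nil subrr.
rewrite !big_cons.
have [a0 aa] := andP (ha i).
have [p1 p2] := pow_incr (m i) a0 aa (hc i).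
apply: step_ineq => //.
- exact: exprn_ge0.
- by rewrite -subr_ge0.
- by apply: prodr_ge0 => j _; apply: exprn_ge0; case/andP: (ha j).
- by rewrite -subr_ge0.
- by apply: lerXn2r => //; rewrite nnegrE //; exact: le_trans aa.
- apply: ler_prod => j _; case/andP: (ha j) => h1 h2.
  rewrite exprn_ge0 //=; apply: lerXn2r => //; rewrite nnegrE //; exact: le_trans h2.
Qed.

Definition Qm (R : numDomainType) (I : finType) (K : nat) (g : I) (w : I -> R)
  (m : {ffun I -> 'I_K}) : R := \prod_i w i ^+ (m i - (i == g))%N.

Lemma Qm_ge0 (R : realDomainType) (I : finType) K g (w : I -> R) (m : {ffun I -> 'I_K}) :
  (forall i, 0 <= w i) -> 0 <= Qm g w m.
Proof. by move=> hw; apply: prodr_ge0 => i _; apply: exprn_ge0. Qed.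

Lemma mono_deriv (R : realDomainType) (I : finType) K (y y' : I -> R) g (d : R)
   (m : {ffun I -> 'I_K}) :
  (forall i, 0 <= y i <= y' i) -> y g + d <= y' g -> 0 <= d -> (0 < m g)%N ->
  d * Qm g y m <= mono y' m - mono y m.
Proof.
move=> hy hg d0 mg.
have e1 : forall (w : I -> R) (ex : I -> nat),
   \prod_i w i ^+ ex i = w g ^+ ex g * \prod_(i | i != g) w i ^+ ex i.
  by move=> w ex; rewrite (bigD1 g).
rewrite /mono /Qm (e1 y' (fun i => m i)) (e1 y (fun i => m i)).
rewrite (e1 y (fun i => m i - (i == g))%N) /= eqxx.
have -> : \prod_(i | i != g) y i ^+ (m i - (i == g))%N = \prod_(i | i != g) y i ^+ m i.
  by apply: eq_bigr => i /negbTE ->; rewrite subn0.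
set R0 := \prod_(i | i != g) y i ^+ m i.
set R1 := \prod_(i | i != g) y' i ^+ m i.
have R00 : 0 <= R0 by apply: prodr_ge0 => i _; apply: exprn_ge0; case/andP: (hy i).
have R01 : R0 <= R1.
  apply: ler_prod => j _; case/andP: (hy j) => h1 h2.
  rewrite exprn_ge0 //=; apply: lerXn2r => //; rewrite nnegrE //; exact: le_trans h2.
have [y0 _] := andP (hy g).
move: mg; case: (m g) => /= n _ n0.
case: n n0 => // n _; rewrite subSS subn0.
have h1 : (y g + d) ^+ n.+1 <= y' g ^+ n.+1.
  by apply: lerXn2r; rewrite ?nnegrE; lra.
have h2' : y g ^+ n <= (y g + d) ^+ n by apply: lerXn2r; rewrite ?nnegrE; lra.
have h2 : y g ^+ n.+1 + d * y g ^+ n <= (y g + d) ^+ n.+1.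
  by rewrite !exprS -mulrDl; apply: ler_wpM2l => //; lra.
have h3 : 0 <= y' g ^+ n.+1 by apply: exprn_ge0; lra.
have h5 : y' g ^+ n.+1 * R0 <= y' g ^+ n.+1 * R1 by apply: ler_wpM2l.
have h6 : d * y g ^+ n * R0 <= (y' g ^+ n.+1 - y g ^+ n.+1) * R0.
  apply: ler_wpM2r => //; lra.
rewrite mulrBl in h6; rewrite mulrA; lra.
Qed.

Definition swap (I : finType) K (h g : I) (m : {ffun I -> 'I_K.+1}) : {ffun I -> 'I_K.+1} :=
  [ffun i => inord (m i + (i == g) - (i == h))%N].

Lemma sum2_le (I : finType) (f : I -> nat) i j : i != j -> (f i + f j <= \sum_k f k)%N.
Proof.
move=> ij; rewrite (bigD1 i) //= (bigD1 j) /=; last by rewrite eq_sym.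
by rewrite addnA leq_addr.
Qed.

Lemma sum1_le (I : finType) (f : I -> nat) i : (f i <= \sum_k f k)%N.
Proof. by rewrite (bigD1 i) //= leq_addr. Qed.

Lemma swap_val (I : finType) K (h g : I) (m : {ffun I -> 'I_K.+1}) :
  (0 < m h)%N -> (\sum_i (m i : nat) <= K)%N ->
  forall i, (swap h g m i : nat) = (m i + (i == g) - (i == h))%N.
Proof.
move=> mh sK i; rewrite ffunE inordK //.
have := sum1_le (fun i => (m i : nat)) i => /= h1.
move: h1; case: (eqVneq i g) => [->|ig] h1.
  case: (eqVneq g h) => [gh|gh]; first by rewrite ?eqxx /=; lia.
  have := sum2_le (fun i => (m i : nat)) gh => /=; lia.
by rewrite /=; case: (i == h) => /=; lia.
Qed.

Lemma sum_bool1 (I : finType) (g : I) : (\sum_i ((i == g) : nat))%N = 1%N.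
Proof.
rewrite (bigD1 g) //= eqxx big1 // => i /negbTE -> //.
Qed.

Lemma swap_sum (I : finType) K (h g : I) (m : {ffun I -> 'I_K.+1}) :
  (0 < m h)%N -> (\sum_i (m i : nat) <= K)%N ->
  (\sum_i (swap h g m i : nat))%N = (\sum_i (m i : nat))%N.
Proof.
move=> mh sK.
have e : forall i, ((swap h g m i : nat) + (i == h) = m i + (i == g))%N.
  move=> i; rewrite swap_val //; case: (eqVneq i h) => [->|]; last by move=> _; rewrite addn0 subn0.
  by rewrite /=; lia.
apply/eqP; rewrite -(eqn_add2r 1) -{1}(sum_bool1 h) -(sum_bool1 g) -!big_split /=.
by apply/eqP; apply: eq_bigr => i _; rewrite e.
Qed.

Lemma swap_id (I : finType) K (g : I) (m : {ffun I -> 'I_K.+1}) : swap g g m = m.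
Proof.
by apply/ffunP => i; rewrite ffunE addnK inord_val.
Qed.

Lemma swapK (I : finType) K (h g : I) (m : {ffun I -> 'I_K.+1}) :
  (0 < m h)%N -> (\sum_i (m i : nat) <= K)%N -> swap g h (swap h g m) = m.
Proof.
move=> mh sK; apply/ffunP => i; apply/val_inj.
rewrite ffunE /= swap_val // inordK.
  by case: (i == g); case: (eqVneq i h) => [->|] /=; lia.
have := ltn_ord (m i).
have := sum1_le (fun i => (m i : nat)) i => /=.
by case: (i == g); case: (eqVneq i h) => [->|] /=; lia.
Qed.

Definition covers (H : finType) K (r : {set H}) (m : {ffun {set H} -> 'I_K}) :=
  [forall i, (0 < m i)%N ==> (i \subset r)].

Lemma subregion_self (H : finType) (rs : {set {set H}}) h : h \in subregion_of rs h.
Proof. by rewrite inE; apply/forall_inP => r _. Qed.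

Lemma exch (H : finType) (rs : {set {set H}}) (m : {ffun {set H} -> 'I_(hec_k rs).+1}) g :
  is_hyperedge m -> g \in subregions rs ->
  exists2 h, (0 < m h)%N & is_hyperedge (swap h g m).
Proof.
move=> he gG; have /and3P [hsupp hsum hcov] := he.
have sK : (\sum_i (m i : nat) <= hec_k rs)%N by rewrite (eqP hsum).
case: (boolP (0 < m g)%N) => mg; first by exists g => //; rewrite swap_id.
have mg0 : (m g : nat) = 0%N by move: mg; case: (m g : nat).
have heq : forall h, (0 < m h)%N ->
    is_hyperedge (swap h g m) = ~~ [exists r in rs, covers r (swap h g m)].
  move=> h mh; rewrite /is_hyperedge swap_sum // hsum /=.
  have -> // : [forall g0, (0 < swap h g m g0)%N ==> (g0 \in subregions rs)].
  apply/forallP => i; apply/implyP; rewrite swap_val //.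
  case: (eqVneq i g) => [-> //|ig] /=; rewrite addn0 => hi.
  have : (0 < m i)%N by move: hi; case: (i == h) => /=; lia.
  by move/(implyP (forallP hsupp i)).
case: (boolP [exists h, (0 < m h)%N && ~~ [exists r in rs, covers r (swap h g m)]]).
  by case/existsP => h /andP [mh hc]; exists h => //; rewrite heq.
rewrite negb_exists => /forallP hall.
have hall' : forall h, (0 < m h)%N -> [exists r in rs, covers r (swap h g m)].
  by move=> h mh; have := hall h; rewrite mh /= negbK.
exfalso.
have F1 : forall h r, (0 < m h)%N -> covers r (swap h g m) -> g \subset r.
  move=> h r mh /forallP /(_ g) /implyP; apply; rewrite swap_val // eqxx.
  have -> : (g == h) = false by apply/negbTE; apply/eqP => e; move: mh; rewrite -e mg0.
  by rewrite mg0.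
have F2 : forall h r i, (0 < m h)%N -> covers r (swap h g m) -> (0 < m i)%N -> i != h ->
    i \subset r.
  move=> h r i mh /forallP /(_ i) /implyP hc mi ih; apply: hc; rewrite swap_val //.
  have ig : (i == g) = false by apply/negbTE/eqP => e; move: mi; rewrite e mg0.
  by rewrite (negbTE ih) ig /= addn0 subn0.
have S1 : forall h, (0 < m h)%N -> (m h : nat) = 1%N.
  move=> h mh; suff : (m h <= 1)%N by lia.
  rewrite leqNgt; apply/negP => m2; have /exists_inP [r rin rc] := hall' h mh.
  move/negP: hcov; apply; apply/exists_inP; exists r => //.
  apply/forallP => i; apply/implyP => mi.
  case: (eqVneq i h) => [->|ih]; last exact: F2 rc mi ih.
  move/forallP: rc => /(_ h) /implyP; apply; rewrite swap_val // eqxx.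
  by case: (h == g) => /=; lia.
set supp := [set i | (0 < m i)%N].
have S2 : #|supp| = hec_k rs.
  rewrite -(eqP hsum) -sum1_card big_mkcond /=; apply: eq_bigr => i _.
  rewrite inE; case: (boolP (0 < m i)%N) => [mi|]; first by rewrite S1.
  by case: (m i : nat).
have [rf S3] : exists rf : {set H} -> {set H},
    forall h, h \in supp -> (rf h \in rs) && covers (rf h) (swap h g m).
  exists (fun h => odflt set0 [pick r in rs | covers r (swap h g m)]).
  move=> h; rewrite inE => mh; case: pickP => [r /andP [-> ->] //|].
  move=> none; have /exists_inP [r rin rc] := hall' h mh.
  by have := none r; rewrite rin rc.
have S4 : {in supp &, injective rf}.
  move=> h1 h2 s1 s2 e; apply/eqP/negP => /negP h12.
  have /andP [r1in c1] := S3 _ s1; have /andP [r2in c2] := S3 _ s2.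
  move: (s1) (s2); rewrite !inE => m1 m2.
  move/negP: hcov; apply; apply/exists_inP; exists (rf h1) => //.
  apply/forallP => i; apply/implyP => mi.
  case: (eqVneq i h1) => [ih|ih]; last exact: F2 c1 mi ih.
  rewrite e; apply: F2 c2 mi _ => //; rewrite ih //.
have [x0 _ gx] := imsetP gG.
have S5 : (hec_k rs <= #|[set r in rs | x0 \in r]|)%N.
  rewrite -S2 -(card_in_imset S4); apply: subset_leq_card.
  apply/subsetP => r /imsetP [h hs ->]; have /andP [rin c] := S3 _ hs.
  rewrite inE rin /=; apply: (subsetP (F1 _ _ _ c)); last by rewrite gx subregion_self.
  by move: hs; rewrite inE.
have [h1 h1s] : exists h1, h1 \in supp.
  apply/set0Pn; apply/eqP => e; move: S2; rewrite e cards0 /hec_k; lia.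
have S6 : (hec_k rs <= #|[set g' in subregions rs | g' \subset rf h1]|)%N.
  have /andP [r1in c1] := S3 _ h1s.
  have gs : g \notin supp :\ h1 by rewrite !inE mg0 andbF.
  have : #|g |: (supp :\ h1)| = hec_k rs.
    by rewrite cardsU1 gs -S2 (cardsD1 h1 supp) h1s.
  move=> <-; apply: subset_leq_card; apply/subsetP => i; rewrite !inE.
  case/orP => [/eqP -> | /andP [ih mi]]; first by rewrite gG (F1 _ _ _ c1) //; move: h1s; rewrite inE.
  rewrite (F2 _ _ _ _ c1 mi ih) ?andbT; last by move: h1s; rewrite inE.
  exact: (implyP (forallP hsupp i) mi).
have A1 : (#|[set r in rs | x0 \in r]| <= \max_(h : H) #|[set r in rs | h \in r]|)%N.
  by apply: leq_bigmax.
have B1 : (#|[set g0 in subregions rs | g0 \subset rf h1]| <=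
     \max_(r in rs) #|[set g0 in subregions rs | g0 \subset r]|)%N.
  by apply: leq_bigmax_cond; exact: (proj1 (andP (S3 _ h1s))).
move: S5 S6 A1 B1; rewrite /hec_k /=.
set a := \max_h _; set b := \max_(r in rs) _; lia.
Qed.

Lemma sum_le_sub (R : realDomainType) (I : finType) (P Q : pred I) (F : I -> R) :
  (forall i, P i -> Q i) -> (forall i, Q i -> 0 <= F i) ->
  \sum_(i | P i) F i <= \sum_(i | Q i) F i.
Proof.
move=> PQ F0; rewrite [X in _ <= X](bigID P) /=.
have -> : \sum_(i | Q i && P i) F i = \sum_(i | P i) F i.
  by apply: eq_bigl => i; case: (boolP (P i)) => [/PQ ->|]; rewrite ?andbF.
apply: ler_wpDr => //; apply: sumr_ge0 => i /andP [qi _]; exact: F0.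
Qed.

Lemma mono_swap (R : realDomainType) (I : finType) K (y : I -> R) (h g : I)
   (m : {ffun I -> 'I_K.+1}) :
  (0 < m h)%N -> (\sum_i (m i : nat) <= K)%N ->
  mono y m = y h * Qm g y (swap h g m).
Proof.
move=> mh sK; rewrite /mono /Qm.
have -> : \prod_i y i ^+ (swap h g m i - (i == g))%N = \prod_i y i ^+ (m i - (i == h))%N.
  apply: eq_bigr => i _; rewrite swap_val //; congr (_ ^+ _).
  by case: (i == g); case: (eqVneq i h) => [->|] /=; lia.
rewrite (bigD1 h) //= [X in _ = _ * X](bigD1 h) //= eqxx.
have -> : \prod_(i | i != h) y i ^+ (m i - (i == h))%N = \prod_(i | i != h) y i ^+ m i.
  by apply: eq_bigr => i /negbTE ->; rewrite subn0.
move: mh; case: (m h : nat) => // n _; rewrite subSS subn0 exprS mulrA //.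
Qed.

Lemma key_ineq (R : realDomainType) (H : finType) (rs : {set {set H}})
   (y y' : {set H} -> R) g (d : R) :
  (forall i, 0 <= y i <= y' i) -> y g + d <= y' g -> 0 <= d -> g \in subregions rs ->
  edge_sum rs y * d <= (\sum_(i in subregions rs) y i) * (edge_sum rs y' - edge_sum rs y).
Proof.
move=> hy hg d0 gG.
have y0 : forall i, 0 <= y i by move=> i; case/andP: (hy i).
set S := \sum_(m : {ffun {set H} -> 'I_(hec_k rs).+1} | is_hyperedge m && (0 < m g)%N)
   Qm g y m.
have S0 : 0 <= S by apply: sumr_ge0 => m _; exact: Qm_ge0.
have Sy0 : 0 <= \sum_(i in subregions rs) y i by apply: sumr_ge0.
have Sa : d * S <= edge_sum rs y' - edge_sum rs y.
  rewrite /edge_sum -sumrB /S big_mkcondr mulr_sumr; apply: ler_sum => m hm.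
  case: ifP => mg.
    by have := mono_deriv (K := (hec_k rs).+1) hy hg d0 mg; rewrite /mono.
  rewrite mulr0 subr_ge0; have := mono_le m hy; rewrite /mono => /andP [_ ->] //.
have Sb : edge_sum rs y <= (\sum_(i in subregions rs) y i) * S.
  rewrite mulr_suml.
  apply: (@le_trans _ _ (\sum_(m | is_hyperedge m)
      \sum_(h | (h \in subregions rs) && ((0 < m h)%N && is_hyperedge (swap h g m)))
        mono y m)).
    apply: ler_sum => m hm.
    have [h0 mh0 he0] := exch hm gG.
    have h0G : h0 \in subregions rs by have /and3P [hs _ _] := hm; exact: (implyP (forallP hs h0)).
    rewrite [X in _ <= X](bigD1 h0) /=; last by rewrite h0G mh0 he0.
    rewrite /mono; apply: ler_wpDr => //; apply: sumr_ge0 => h _.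
    by apply: prodr_ge0 => i _; exact: exprn_ge0.
  rewrite (exchange_big_dep (fun h => h \in subregions rs)) /=; last by move=> m h _ /andP [].
  apply: ler_sum => h hG.
  have sKof : forall m : {ffun {set H} -> 'I_(hec_k rs).+1}, is_hyperedge m ->
      (\sum_i (m i : nat) <= hec_k rs)%N.
    by move=> m /and3P [_ /eqP -> _].
  rewrite (eq_bigr (fun m => y h * Qm g y (swap h g m))); last first.
    move=> m /andP [hm /andP [_ /andP [mh _]]]; exact: mono_swap (sKof m hm).
  rewrite -mulr_sumr; apply: ler_wpM2l => //.
  set P := fun m : {ffun {set H} -> 'I_(hec_k rs).+1} => is_hyperedge m &&
    ((h \in subregions rs) && ((0 < m h)%N && is_hyperedge (swap h g m))).
  rewrite (eq_bigl (fun m => m \in [set x | P x])); last by move=> m; rewrite inE.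
  rewrite -big_imset /=; last first.
    move=> m1 m2; rewrite !inE => /andP [hm1 /andP [_ /andP [mh1 _]]].
    move=> /andP [hm2 /andP [_ /andP [mh2 _]]] e.
    by rewrite -(swapK g mh1 (sKof _ hm1)) e swapK // sKof.
  apply: sum_le_sub => [m'|m' _]; last exact: Qm_ge0.
  case/imsetP => m; rewrite inE => /andP [hm /andP [_ /andP [mh hs]]] ->.
  rewrite hs /= swap_val ?sKof // eqxx.
  by move: mh; case: (eqVneq g h) => [->|] /=; lia.
apply: le_trans (_ : (\sum_(i in subregions rs) y i) * S * d <= _).
  by apply: ler_wpM2r.
by rewrite -mulrA [S * d]mulrC; apply: ler_wpM2l.
Qed.

Definition wB (R : numDomainType) (H : finType) (P : H -> R) (B : {set H}) :=
  fun g : {set H} => probA P (g :&: B).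

Definition FB (R : numDomainType) (H : finType) (rs : {set {set H}}) (P : H -> R) B :=
  edge_sum rs (wB P B).

Lemma probA_ge0 (R : realFieldType) (H : finType) (P : H -> R) (A : {set H}) :
  (forall h, 0 <= P h) -> 0 <= probA P A.
Proof. by move=> P0; apply: sumr_ge0. Qed.

Lemma probA_sub (R : realFieldType) (H : finType) (P : H -> R) (A B : {set H}) :
  (forall h, 0 <= P h) -> A \subset B -> probA P A <= probA P B.
Proof.
move=> P0 AB; apply: sum_le_sub => // i; exact: (subsetP AB).
Qed.

Lemma wB_mono (R : realFieldType) (H : finType) (P : H -> R) (B B' : {set H}) :
  (forall h, 0 <= P h) -> B \subset B' -> forall i, 0 <= wB P B i <= wB P B' i.
Proof.
move=> P0 BB i; rewrite /wB probA_ge0 //=; apply: probA_sub => //.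
exact: setIS.
Qed.

Lemma edge_sum_mono (R : realFieldType) (H : finType) (rs : {set {set H}}) (w w' : {set H} -> R) :
  (forall i, 0 <= w i <= w' i) -> 0 <= edge_sum rs w <= edge_sum rs w'.
Proof.
move=> hw; apply/andP; split.
  apply: sumr_ge0 => m _; have := mono_le m hw; rewrite /mono => /andP [] //.
apply: ler_sum => m _; have := mono_le m hw; rewrite /mono => /andP [] //.
Qed.

Lemma edge_sum_ext (R : realFieldType) (H : finType) (rs : {set {set H}}) (w w' : {set H} -> R) :
  (forall i, w i = w' i) -> edge_sum rs w = edge_sum rs w'.
Proof. by move=> e; apply: eq_bigr => m _; apply: eq_bigr => i _; rewrite e. Qed.

Lemma FB_mono (R : realFieldType) (H : finType) (rs : {set {set H}}) (P : H -> R) (B B' : {set H}) :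
  (forall h, 0 <= P h) -> B \subset B' -> 0 <= FB rs P B <= FB rs P B'.
Proof. by move=> P0 BB; apply: edge_sum_mono; apply: wB_mono. Qed.

Lemma sub_eq (H : finType) (rs : {set {set H}}) h x :
  h \in subregion_of rs x -> subregion_of rs h = subregion_of rs x.
Proof.
rewrite inE => /forall_inP hyp; apply/setP => z; rewrite !inE.
by apply: eq_forallb_in => r rin; rewrite (eqP (hyp r rin)).
Qed.

Lemma in_subregions (H : finType) (rs : {set {set H}}) h i :
  (i \in subregions rs) && (h \in i) = (i == subregion_of rs h).
Proof.
apply/andP/eqP => [[/imsetP [x _ ->] hx]|->].
  by rewrite (sub_eq hx).
by rewrite subregion_self imset_f.
Qed.

Lemma partition_sum (R : realFieldType) (H : finType) (rs : {set {set H}}) (P : H -> R) B :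
  \sum_(i in subregions rs) wB P B i = probA P B.
Proof.
rewrite /wB /probA (exchange_big_dep (fun h => h \in B)) /=; last first.
  by move=> i h _; rewrite inE => /andP [].
apply: eq_bigr => h hB; rewrite (big_pred1 (subregion_of rs h)) // => i /=.
by rewrite inE hB andbT in_subregions.
Qed.

Definition Cset (H T O : finType) (ev : H -> T -> O) t o := [set x | ev x t == o].

Definition Dg (R : realFieldType) (H T O : finType) (ev : H -> T -> O) (P : H -> R)
  (rs : {set {set H}}) t (B : {set H}) :=
  \sum_(h in B) (P h / probA P B) *
     (FB rs P B - FB rs P (B :&: Cset ev t (ev h t))).

Lemma vs_U (H T O : finType) (ev : H -> T -> O) S t o :
  version_space ev (S :|: [set (t, o)]) = version_space ev S :&: Cset ev t o.
Proof.
apply/setP => x; rewrite !inE; apply/forall_inP/andP => [hx|[/forall_inP hx ho]].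
  split; first by apply/forall_inP => to tS; apply: hx; rewrite inE tS.
  by have := hx (t, o); rewrite !inE eqxx orbT => /(_ isT).
move=> to; rewrite !inE => /orP [/hx //|/eqP -> //].
Qed.

Lemma fHEC_diff (R : realFieldType) (H T O : finType) (ev : H -> T -> O) (P : H -> R)
  (rs : {set {set H}}) S t o :
  f_HEC ev P rs (S :|: [set (t, o)]) - f_HEC ev P rs S =
  FB rs P (version_space ev S) - FB rs P (version_space ev S :&: Cset ev t o).
Proof.
rewrite /f_HEC vs_U /FB /wB.
set a := edge_sum _ _; set b := edge_sum _ _; set c := edge_sum _ _; lra.
Qed.

Lemma gain_Dg (R : realFieldType) (H T O : finType) (ev : H -> T -> O) (P : H -> R)
  (rs : {set {set H}}) S t :
  hec_gain ev P rs t S = Dg ev P rs t (version_space ev S).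
Proof. by apply: eq_bigr => h _; rewrite fHEC_diff. Qed.

Lemma Dg_ge0 (R : realFieldType) (H T O : finType) (ev : H -> T -> O) (P : H -> R)
  (rs : {set {set H}}) t B :
  (forall h, 0 <= P h) -> 0 <= Dg ev P rs t B.
Proof.
move=> P0; apply: sumr_ge0 => h _; apply: mulr_ge0.
  by apply: divr_ge0 => //; apply: probA_ge0.
rewrite subr_ge0; have := FB_mono rs P0 (subsetIl B (Cset ev t (ev h t))).
by case/andP.
Qed.

Lemma arith (R : realFieldType) (FB FY FB' FY' pY M dl K : R) :
  0 <= pY -> 0 <= M -> 0 <= dl -> 0 <= K -> 0 < pY + M -> 0 <= FY ->
  FB - FY <= FB' - FY' -> FY * dl <= pY * (FY' - FY) -> FY <= FY' ->
  FB - (pY * FY + K) / (pY + M) <= FB' - ((pY + dl) * FY' + K) / (pY + dl + M).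
Proof.
move=> pY0 M0 dl0 K0 d0 FY0 h1 h2 h3.
have d'0 : 0 < pY + dl + M by lra.
have e1 : FB - (pY * FY + K) / (pY + M) = (FB - FY) + M * (FY / (pY + M)) - K / (pY + M).
  by field; rewrite gt_eqF.
have e2 : FB' - ((pY + dl) * FY' + K) / (pY + dl + M) =
   (FB' - FY') + M * (FY' / (pY + dl + M)) - K / (pY + dl + M).
  by field; rewrite gt_eqF.
rewrite e1 e2.
have p2 : FY / (pY + M) <= FY' / (pY + dl + M).
  rewrite ler_pdivrMr // mulrAC ler_pdivlMr //.
  have h4 : FY * dl <= (pY + M) * (FY' - FY).
    apply: le_trans h2 _; apply: ler_wpM2r; lra.
  move: h4; rewrite !mulrDr !mulrDl ?mulrN ?mulNr; lra.
have p3 : K / (pY + dl + M) <= K / (pY + M).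
  rewrite ler_pdivrMr // mulrAC ler_pdivlMr //; apply: ler_wpM2l => //; lra.
have p4 : M * (FY / (pY + M)) <= M * (FY' / (pY + dl + M)) by apply: ler_wpM2l.
lra.
Qed.

Lemma edge_incr (R : realFieldType) (H : finType) (rs : {set {set H}}) (a a' c : {set H} -> R) :
  (forall i, 0 <= a i <= a' i) -> (forall i, 0 <= c i) ->
  edge_sum rs (fun i => a i + c i) - edge_sum rs a <=
  edge_sum rs (fun i => a' i + c i) - edge_sum rs a'.
Proof.
move=> ha hc; rewrite /edge_sum -!sumrB; apply: ler_sum => m _.
by have := mono_incr m ha hc; rewrite /mono.
Qed.

Lemma Dg_formula (R : realFieldType) (H T O : finType) (ev : H -> T -> O) (P : H -> R)
  (rs : {set {set H}}) t B :
  probA P B != 0 ->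
  Dg ev P rs t B = FB rs P B -
     (\sum_(h in B) P h * FB rs P (B :&: Cset ev t (ev h t))) / probA P B.
Proof.
move=> pnz; rewrite /Dg.
have -> : \sum_(h in B) P h / probA P B * (FB rs P B - FB rs P (B :&: Cset ev t (ev h t))) =
   (\sum_(h in B) P h * (FB rs P B - FB rs P (B :&: Cset ev t (ev h t)))) / probA P B.
  by rewrite mulr_suml; apply: eq_bigr => h _; rewrite mulrAC.
rewrite (eq_bigr (fun h => P h * FB rs P B - P h * FB rs P (B :&: Cset ev t (ev h t))));
  last by move=> h _; rewrite mulrBr.
rewrite sumrB -mulr_suml.
rewrite -/(probA P B); field => //.
Qed.

Lemma Dg_zero (R : realFieldType) (H T O : finType) (ev : H -> T -> O) (P : H -> R)
  (rs : {set {set H}}) t B :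
  probA P B = 0 -> Dg ev P rs t B = 0.
Proof.
by move=> p0; rewrite /Dg p0 invr0; apply: big1 => h _; rewrite mulr0 mul0r.
Qed.

Lemma Dg_step (R : realFieldType) (H T O : finType) (ev : H -> T -> O) (P : H -> R)
  (rs : {set {set H}}) t (B : {set H}) h0 :
  (forall h, 0 <= P h) -> h0 \notin B -> Dg ev P rs t B <= Dg ev P rs t (h0 |: B).
Proof.
move=> P0 hB.
have pB0 := probA_ge0 B P0.
case: (eqVneq (probA P B) 0) => [pz|pnz].
  by rewrite Dg_zero //; apply: Dg_ge0.
set C := Cset ev t (ev h0 t).
set Y := B :&: C; set Z := B :\: C.
have h0C : h0 \in C by rewrite inE.
have h0Y : h0 \notin Y by rewrite inE (negbTE hB).
have eY' : (h0 |: B) :&: C = h0 |: Y.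
  apply/setP => z; rewrite !inE; case: (eqVneq z h0) => [->|] /=; rewrite ?eqxx //.
have eZ' : (h0 |: B) :\: C = Z.
  apply/setP => z; rewrite !inE; case: (eqVneq z h0) => [->|] /=; rewrite ?eqxx ?andbF //.
have epB : probA P B = probA P Y + probA P Z by rewrite /probA (big_setID C).
have epB' : probA P (h0 |: B) = probA P Y + P h0 + probA P Z.
  have : probA P (h0 |: B) = P h0 + probA P B by rewrite /probA big_setU1.
  lra.
have epY' : probA P (h0 |: Y) = probA P Y + P h0.
  by rewrite /probA big_setU1 //= addrC.
have pB'nz : probA P (h0 |: B) != 0.
  rewrite epB'; have := P0 h0; have := probA_ge0 Y P0; have := probA_ge0 Z P0.
  move: pnz; rewrite epB => pnz *; apply/eqP => e; move/eqP: pnz; lra.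
set K := \sum_(h in Z) P h * FB rs P (B :&: Cset ev t (ev h t)).
have dec : \sum_(h in B) P h * FB rs P (B :&: Cset ev t (ev h t)) =
    probA P Y * FB rs P Y + K.
  rewrite (big_setID C) /=; congr (_ + _).
  rewrite /probA mulr_suml; apply: eq_bigr => h; rewrite !inE => /andP [_ /eqP hC].
  by rewrite hC.
have dec' : \sum_(h in h0 |: B) P h * FB rs P ((h0 |: B) :&: Cset ev t (ev h t)) =
    probA P (h0 |: Y) * FB rs P (h0 |: Y) + K.
  rewrite (big_setID C) /= eY' eZ'; congr (_ + _).
    rewrite /probA mulr_suml; apply: eq_bigr => h hin.
    have hC : ev h t = ev h0 t.
      by move: hin; rewrite !inE => /orP [/eqP -> // | /andP [_ /eqP]].
    by rewrite hC -/C eY'.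
  apply: eq_bigr => h; rewrite !inE => /andP [hC hB'].
  congr (_ * FB rs P _); apply/setP => z; rewrite !inE.
  case: (eqVneq z h0) => [->|] //=.
  rewrite (negbTE hB) /=; apply/negbTE; apply: contra hC => /eqP e.
  by rewrite e.
rewrite (Dg_formula _ _ _ pnz) (Dg_formula _ _ _ pB'nz) dec dec' epB epB' epY'.
have K0 : 0 <= K.
  apply: sumr_ge0 => h _; apply: mulr_ge0 => //.
  by have /andP [] := FB_mono rs P0 (subxx (B :&: Cset ev t (ev h t))).
have sYY : Y \subset h0 |: Y by apply: subsetUr.
have /andP [FY0 FYY] := FB_mono rs P0 sYY.
apply: arith => //; try exact: probA_ge0.
- rewrite -epB lt_def pnz //.
- (* supermodular *)
  have split : forall A : {set H}, forall i, wB P A i = wB P (A :&: C) i + wB P (A :\: C) i.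
    by move=> A i; rewrite /wB /probA (big_setID C) setIA setIDA.
  rewrite /FB (edge_sum_ext rs (split B)) (edge_sum_ext rs (split (h0 |: B))) eY' eZ' -/Y -/Z.
  apply: edge_incr => i; last by rewrite /wB probA_ge0.
  exact: wB_mono.
-
  have := key_ineq (rs := rs) (g := subregion_of rs h0) (d := P h0) (wB_mono P0 sYY).
  rewrite partition_sum; apply => //; last by apply: imset_f.
  rewrite /wB le_eqVlt; apply/orP; left; apply/eqP.
  have -> : subregion_of rs h0 :&: (h0 |: Y) = h0 |: (subregion_of rs h0 :&: Y).
    apply/setP => z; rewrite !inE; case: (eqVneq z h0) => [->|] //=.
    by rewrite andbT; have := subregion_self rs h0; rewrite inE.
  rewrite /probA big_setU1 /=; first by rewrite addrC.
  by rewrite inE (negbTE h0Y) andbF.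
Qed.

Lemma Dg_chain (R : realFieldType) (H T O : finType) (ev : H -> T -> O) (P : H -> R)
  (rs : {set {set H}}) t :
  (forall h, 0 <= P h) ->
  forall n (B B2 : {set H}), #|B2 :\: B| = n -> B \subset B2 ->
  Dg ev P rs t B <= Dg ev P rs t B2.
Proof.
move=> P0; elim => [|n IH] B B2 hc hs.
  have : B2 :\: B = set0 by apply/eqP; rewrite -cards_eq0 hc.
  move/eqP; rewrite setD_eq0 => s2.
  by have -> : B = B2 by apply/eqP; rewrite eqEsubset hs s2.
have [h0 h0in] : exists h0, h0 \in B2 :\: B.
  by apply/set0Pn; apply/eqP => e; move: hc; rewrite e cards0.
move: (h0in); rewrite inE => /andP [h0B h0B2].
apply: le_trans (Dg_step ev rs t P0 h0B) _.
apply: IH.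
  have -> : B2 :\: (h0 |: B) = (B2 :\: B) :\ h0.
    apply/setP => z; rewrite !inE; case: (eqVneq z h0) => //=.
  by move: hc; rewrite (cardsD1 h0) h0in => [[]].
by rewrite subUset sub1set h0B2 hs.
Qed.

Unset Implicit Arguments.
Theorem theorem2 (R : realFieldType) (H T O : finType) (ev : H -> T -> O)
    (P : H -> R) (rs : {set {set H}})
    (P_ge0 : forall h, 0 <= P h)
    (P_sum1 : \sum_(h : H) P h = 1)
    (rs_cover : \bigcup_(r in rs) r = [set: H]) :
  (forall (S : {set T * O}) (t : T) (h : H),
      0 <= f_HEC ev P rs (S :|: [set (t, ev h t)]) - f_HEC ev P rs S) /\
  (forall (S S' : {set T * O}) (t : T),
      S \subset S' ->
      0 < probA P (version_space ev S') ->
      hec_gain ev P rs t S' <= hec_gain ev P rs t S).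
Proof.
split.
  move=> S t h; rewrite fHEC_diff subr_ge0.
  by have /andP [] := FB_mono rs P_ge0 (subsetIl (version_space ev S) (Cset ev t (ev h t))).
move=> S S' t sub _; rewrite !gain_Dg.
apply: (Dg_chain ev rs t P_ge0 (erefl _)).
apply/subsetP => x; rewrite !inE => /forall_inP hx; apply/forall_inP => to tS.
by apply: hx; exact: (subsetP sub).
Qed.
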